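(* Let $E$ be a $\sigma$-unital $C^*$-algebra and let $L\subseteq M(E)$ be a separable sub-$C^*$-algebra. Then there exists a separable sub-$C^*$-algebra $D\subseteq E$ containing an approximate unit for $E$ such that the image of the naturally induced unital injective $*$-homomorphism $M(D)\to M(E)$ contains $L$.
   Context: If $D\subseteq E$ is a sub-$C^*$-algebra containing an approximate unit of $E$, the inclusion $D\to E$ induces a unital injective $*$-homomorphism $M(D)\to M(E)$ (realizing $M(D)=\{x\in D^{**}:xD+Dx\subseteq D\}\subseteq D^{**}\subseteq E^{**}$ and similarly for $E$). *)

(* Defs.v *)
From HB Require Import structures.
From mathcomp Require Import all_boot all_order all_algebra.
From mathcomp Require Import reals complex.
Set Implicit Arguments. Unset Strict Implicit. Unset Printing Implicit Defensive.
Import Order.TTheory GRing.Theory Num.Theory.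
Local Open Scope ring_scope.

Record CStarAlg (R : realType) := {
  cs_carrier :> lmodType (R[i]);
  cs_mul  : cs_carrier -> cs_carrier -> cs_carrier;
  cs_star : cs_carrier -> cs_carrier;
  cs_norm : cs_carrier -> R;
  cs_mulA : forall x y z, cs_mul x (cs_mul y z) = cs_mul (cs_mul x y) z;
  cs_mulDl : forall x y z, cs_mul (x + y) z = cs_mul x z + cs_mul y z;
  cs_mulDr : forall x y z, cs_mul x (y + z) = cs_mul x y + cs_mul x z;
  cs_mulZl : forall (c : R[i]) x y, cs_mul (c *: x) y = c *: cs_mul x y;
  cs_mulZr : forall (c : R[i]) x y, cs_mul x (c *: y) = c *: cs_mul x y;
  cs_starK : forall x, cs_star (cs_star x) = x;
  cs_starD : forall x y, cs_star (x + y) = cs_star x + cs_star y;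
  cs_starZ : forall (c : R[i]) x, cs_star (c *: x) = conjc c *: cs_star x;
  cs_starM : forall x y, cs_star (cs_mul x y) = cs_mul (cs_star y) (cs_star x);
  cs_norm_eq0 : forall x, cs_norm x = 0 -> x = 0;
  cs_normD : forall x y, cs_norm (x + y) <= cs_norm x + cs_norm y;
  cs_normZ : forall (c : R[i]) x, cs_norm (c *: x) = Normc.normc c * cs_norm x;
  cs_normM : forall x y, cs_norm (cs_mul x y) <= cs_norm x * cs_norm y;
  cs_normC : forall x, cs_norm (cs_mul (cs_star x) x) = cs_norm x ^+ 2;
  cs_complete : forall u : nat -> cs_carrier,
    (forall e : R, 0 < e -> exists N, forall m n, (N <= m)%N -> (N <= n)%N ->
        cs_norm (u m - u n) < e) ->
    exists l, forall e : R, 0 < e -> exists N, forall n, (N <= n)%N ->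
        cs_norm (u n - l) < e
}.

Section CStar.
Variables (R : realType) (E : CStarAlg R).
Local Notation "x ** y" := (cs_mul x y) (at level 40, left associativity).

Definition subset_of := E -> Prop.

Definition seq_cvg (u : nat -> E) (l : E) :=
  forall e : R, 0 < e -> exists N, forall n, (N <= n)%N -> cs_norm (u n - l) < e.

Definition sub_cstar (D : subset_of) :=
  ((D 0) /\
   (forall x y, D x -> D y -> D (x + y)) /\
   (forall (c : R[i]) x, D x -> D (c *: x)) /\
   (forall x y, D x -> D y -> D (x ** y)) /\
   (forall x, D x -> D (cs_star x)) /\
   (forall u l, (forall n, D (u n)) -> seq_cvg u l -> D l)).

Definition separable (D : subset_of) :=
  exists s : nat -> E, (forall n, D (s n)) /\
    forall x, D x -> forall e : R, 0 < e -> exists n, cs_norm (x - s n) < e.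

Definition positive (x : E) := exists b, x = cs_star b ** b.

Definition approx_unit_in (D : subset_of) (I : Type) (le : I -> I -> Prop)
    (e : I -> E) :=
  ((exists i : I, True) /\
   (forall i, le i i) /\
   (forall i j k, le i j -> le j k -> le i k) /\
   (forall i j, exists k, le i k /\ le j k) /\
   (forall i, D (e i) /\ positive (e i) /\ cs_norm (e i) <= 1) /\
   (forall i j, le i j -> positive (e j - e i)) /\
   (forall x (eps : R), 0 < eps -> exists i0, forall i, le i0 i ->
          cs_norm (e i ** x - x) < eps /\ cs_norm (x ** e i - x) < eps)).

Definition contains_approx_unit (D : subset_of) :=
  exists (I : Type) (le : I -> I -> Prop) (e : I -> E), approx_unit_in D le e.

Definition sigma_unital :=
  exists e : nat -> E, approx_unit_in (fun _ => True) (fun m n => (m <= n)%N) e.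

(** * Multiplier algebra M(E) as double centralizers (L, R) *)
Definition mult := ((E -> E) * (E -> E))%type.

Definition is_linear (f : E -> E) :=
  forall (c : R[i]) x y, f (c *: x + y) = c *: f x + f y.

Definition is_dc (m : mult) :=
  [/\ is_linear m.1, is_linear m.2 & forall x y, x ** m.1 y = m.2 x ** y].

Definition mzero : mult := (fun _ => 0, fun _ => 0).
Definition madd (m n : mult) : mult := (fun x => m.1 x + n.1 x, fun x => m.2 x + n.2 x).
Definition mscale (c : R[i]) (m : mult) : mult := (fun x => c *: m.1 x, fun x => c *: m.2 x).
Definition mmul (m n : mult) : mult := (fun x => m.1 (n.1 x), fun x => n.2 (m.2 x)).
Definition mstar (m : mult) : mult := (fun x => cs_star (m.2 (cs_star x)), fun x => cs_star (m.1 (cs_star x))).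

(** operator-norm bound ||m - n|| <= r (the norm of (L,R) is ||L||) *)
Definition mdist_le (m n : mult) (r : R) := forall x, cs_norm (m.1 x - n.1 x) <= r * cs_norm (x).

Definition mseq_cvg (u : nat -> mult) (l : mult) :=
  forall e : R, 0 < e -> exists N, forall n, (N <= n)%N -> mdist_le (u n) l e.

Definition msub_cstar (S : mult -> Prop) :=
  ((forall m, S m -> is_dc m) /\
   (S mzero) /\
   (forall m n, S m -> S n -> S (madd m n)) /\
   (forall c m, S m -> S (mscale c m)) /\
   (forall m n, S m -> S n -> S (mmul m n)) /\
   (forall m, S m -> S (mstar m)) /\
   (forall u l, (forall n, S (u n)) -> is_dc l -> mseq_cvg u l -> S l)).

Definition mseparable (S : mult -> Prop) :=
  exists s : nat -> mult, (forall n, S (s n)) /\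
    forall m, S m -> forall e : R, 0 < e -> exists n, mdist_le m (s n) e.

(** double centralizers of a sub-C*-algebra D (elements of M(D)), represented by
    maps on E whose relevant behaviour is their restriction to D *)
Definition is_dc_on (D : subset_of) (n : mult) :=
  [/\ (forall x, D x -> D (n.1 x) /\ D (n.2 x)),
      (forall (c : R[i]) x y, D x -> D y -> n.1 (c *: x + y) = c *: n.1 x + n.1 y
                                        /\ n.2 (c *: x + y) = c *: n.2 x + n.2 y) &
      (forall x y, D x -> D y -> x ** n.1 y = n.2 x ** y)].

(** graph of the induced map M(D) -> M(E) (when D contains an approximate unit
    of E): n in M(D) is sent to the unique m in M(E) extending n *)
Definition induced_mult (D : subset_of) (n m : mult) :=
  [/\ is_dc_on D n, is_dc m & forall d, D d -> m.1 d = n.1 d /\ m.2 d = n.2 d].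

Definition in_image_of_MD (D : subset_of) (m : mult) :=
  exists n, induced_mult D n m.

End CStar.

(* Main.v *)
Require Import Defs.
From mathcomp Require Import all_boot all_order all_algebra.
From mathcomp Require Import reals complex.
From mathcomp Require Import ring lra.
Set Implicit Arguments. Unset Strict Implicit. Unset Printing Implicit Defensive.
Import Order.TTheory GRing.Theory Num.Theory.
Local Open Scope ring_scope.
Section Basic.
Variables (R : realType) (E : CStarAlg R).
Local Notation "x ** y" := (cs_mul x y) (at level 40, left associativity).
Local Notation N := (@cs_norm R E).

Lemma normcN1 : Normc.normc (-1 : R[i]) = 1.
Proof. by rewrite /Normc.normc /= oppr0 expr0n /= addr0 sqrrN expr1n sqrtr1. Qed.

Lemma normc0' : Normc.normc (0 : R[i]) = 0.
Proof. exact: Normc.normc0. Qed.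

Lemma norm0 : N 0 = 0.
Proof. by rewrite -(scale0r (0 : E)) cs_normZ normc0' mul0r. Qed.

Lemma normN (x : E) : N (- x) = N x.
Proof. by rewrite -scaleN1r cs_normZ normcN1 mul1r. Qed.

Lemma norm_ge0 (x : E) : 0 <= N x.
Proof.
have := cs_normD x (- x); rewrite subrr norm0 normN => h. lra.
Qed.

Lemma normB (x y : E) : N (x - y) = N (y - x).
Proof. by rewrite -opprB normN. Qed.

Lemma mulNl (x y : E) : (- x) ** y = - (x ** y).
Proof. by rewrite -scaleN1r cs_mulZl scaleN1r. Qed.
Lemma mulNr (x y : E) : x ** (- y) = - (x ** y).
Proof. by rewrite -scaleN1r cs_mulZr scaleN1r. Qed.
Lemma mulBl (x y z : E) : (x - y) ** z = x ** z - y ** z.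
Proof. by rewrite cs_mulDl mulNl. Qed.
Lemma mulBr (x y z : E) : z ** (x - y) = z ** x - z ** y.
Proof. by rewrite cs_mulDr mulNr. Qed.
Lemma starN (x : E) : cs_star (- x) = - cs_star x.
Proof. by rewrite -scaleN1r cs_starZ rmorphN1 scaleN1r. Qed.
Lemma starB (x y : E) : cs_star (x - y) = cs_star x - cs_star y.
Proof. by rewrite cs_starD starN. Qed.

Lemma norm_star_le (x : E) : N x <= N (cs_star x).
Proof.
have h1 := cs_normC x; have h2 := cs_normM (cs_star x) x.
rewrite h1 in h2; have h3 := norm_ge0 x; have h4 := norm_ge0 (cs_star x).
nra.
Qed.

Lemma norm_star (x : E) : N (cs_star x) = N x.
Proof.
apply/eqP; rewrite eq_le norm_star_le andbT.
by have := norm_star_le (cs_star x); rewrite cs_starK.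
Qed.

Lemma bnd (a eps : R) : 0 <= a -> 0 < eps -> a * (eps / (2 * (a + 1))) < eps / 2.
Proof.
move=> ha he; set t := eps / (2 * (a + 1)).
have ht : t * (2 * (a + 1)) = eps by rewrite /t mulfVK // ; lra.
have tp : 0 < t by rewrite /t divr_gt0 //; lra.
nra.
Qed.

End Basic.
Section Sc.
Variable (R : realType).

Definition sc (z1 z2 : int) (n : nat) : R[i] :=
  Complex (z1%:~R / n.+1%:R) (z2%:~R / n.+1%:R).

Lemma approx_real (a d : R) (n : nat) : 0 < d -> d^-1 < n.+1%:R ->
  `| a - (Num.floor (a * n.+1%:R))%:~R / n.+1%:R | < d.
Proof.
move=> hd hn.
set M : R := n.+1%:R. have hM : 0 < M by rewrite /M ltr0n.
set z : R := (Num.floor (a * M))%:~R.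
have h1 : z <= a * M by exact: floor_le.
have h2 : a * M < z + 1 by rewrite /z -[1]/(1%:~R) -intrD; exact: floorD1_gt.
have -> : a - z / M = (a * M - z) / M by field; lra.
rewrite normrM ger0_norm ?subr_ge0 // ger0_norm ?invr_ge0 ?ltW //.
rewrite ltr_pdivrMr //.
have : 1 < d * M.
  by rewrite -ltr_pdivrMl // mulr1.
lra.
Qed.

Lemma normc_le (a b : R) : Normc.normc (Complex a b) <= `|a| + `|b|.
Proof.
rewrite /Normc.normc.
have h : 0 <= `|a| + `|b| by rewrite addr_ge0.
rewrite -(ger0_norm h) -sqrtr_sqr ler_wsqrtr //.
rewrite -(real_normK (num_real a)) -(real_normK (num_real b)).
have := normr_ge0 a; have := normr_ge0 b. nra.
Qed.

Lemma approx_complex (c : R[i]) (d : R) : 0 < d ->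
  exists z1 z2 n, Normc.normc (c - sc z1 z2 n) < d.
Proof.
move=> hd; case: c => a b.
have hd2 : 0 < d / 2 by lra.
pose n := Num.truncn ((d / 2)^-1).
have hn : (d / 2)^-1 < n.+1%:R by exact: truncnS_gt.
exists (Num.floor (a * n.+1%:R)), (Num.floor (b * n.+1%:R)), n.
have h1 := approx_real a hd2 hn; have h2 := approx_real b hd2 hn.
apply: le_lt_trans (normc_le _ _) _.
rewrite /=. lra.
Qed.
End Sc.
Arguments sc {R}.
Section Constr.
Variables (R : realType) (E : CStarAlg R) (e : nat -> E) (s : nat -> mult E).
Local Notation "x ** y" := (cs_mul x y) (at level 40, left associativity).
Local Notation N := (@cs_norm R E).

Definition gen (n : nat) : E :=
  match unpickle n : option (bool * nat * nat) with
  | Some (true, j, k) => (s j).1 (e k)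
  | Some (false, k, _) => e k
  | None => 0
  end.

Fixpoint fl (k n : nat) : E :=
  match k with
  | 0 => gen n
  | k'.+1 =>
    match unpickle n : option (nat * nat * nat * int * int * nat) with
    | Some (t, a, b, z1, z2, m) =>
      match t with
      | 0 => fl k' a + fl k' b
      | 1 => sc z1 z2 m *: fl k' a
      | 2 => fl k' a ** fl k' b
      | 3 => cs_star (fl k' a)
      | _ => fl k' a
      end
    | None => fl k' n
    end
  end.

Lemma fl_code k t a b z1 z2 m : fl k.+1 (pickle (t, a, b, z1, z2, m)) =
  match t with
      | 0 => fl k a + fl k b
      | 1 => sc z1 z2 m *: fl k a
      | 2 => fl k a ** fl k b
      | 3 => cs_star (fl k a)
      | _ => fl k a
      end.
Proof. by rewrite /= pickleK. Qed.

Definition Clev k (x : E) := exists n, fl k n = x.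
Definition Cs (x : E) := exists k, Clev k x.

Lemma Clev_S k x : Clev k x -> Clev k.+1 x.
Proof. by case=> n <-; exists (pickle (4%N, n, 0%N, 0%Z, 0%Z, 0%N)); rewrite fl_code. Qed.

Lemma Clev_mono k k' x : (k <= k')%N -> Clev k x -> Clev k' x.
Proof.
elim: k' => [|k' IH]; first by rewrite leqn0 => /eqP ->.
rewrite leq_eqVlt ltnS => /orP [/eqP -> //| h] hx.
exact: Clev_S (IH h hx).
Qed.

Lemma C2 x y : Cs x -> Cs y -> exists k, Clev k x /\ Clev k y.
Proof.
case=> k hx [k' hy]; exists (maxn k k'); split.
  exact: Clev_mono (leq_maxl _ _) hx.
exact: Clev_mono (leq_maxr _ _) hy.
Qed.

Lemma Cadd x y : Cs x -> Cs y -> Cs (x + y).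
Proof.
move=> hx hy; case: (C2 hx hy) => k [[a <-] [b <-]].
by exists k.+1, (pickle (0%N, a, b, 0%Z, 0%Z, 0%N)); rewrite fl_code.
Qed.
Lemma Cmul x y : Cs x -> Cs y -> Cs (x ** y).
Proof.
move=> hx hy; case: (C2 hx hy) => k [[a <-] [b <-]].
by exists k.+1, (pickle (2%N, a, b, 0%Z, 0%Z, 0%N)); rewrite fl_code.
Qed.
Lemma Cscale z1 z2 m x : Cs x -> Cs (sc z1 z2 m *: x).
Proof.
case=> k [a <-].
by exists k.+1, (pickle (1%N, a, 0%N, z1, z2, m)); rewrite fl_code.
Qed.
Lemma Cstar x : Cs x -> Cs (cs_star x).
Proof.
case=> k [a <-].
by exists k.+1, (pickle (3%N, a, 0%N, 0%Z, 0%Z, 0%N)); rewrite fl_code.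
Qed.
Lemma Ce k : Cs (e k).
Proof. by exists 0%N, (pickle (false, k, 0%N)); rewrite /= /gen pickleK. Qed.
Lemma Cse j k : Cs ((s j).1 (e k)).
Proof. by exists 0%N, (pickle (true, j, k)); rewrite /= /gen pickleK. Qed.
Lemma C0 : Cs 0.
Proof.
have [k [a ha]] := Ce 0.
exists k.+1, (pickle (1%N, a, 0%N, 0%Z, 0%Z, 0%N)); rewrite fl_code /sc.
have -> : Complex (0%:~R / 1%:R) (0%:~R / 1%:R) = 0 :> R[i].
  by rewrite mul0r.
by rewrite scale0r.
Qed.

Definition Dset (x : E) := forall eps : R, 0 < eps -> exists y, Cs y /\ N (x - y) < eps.

Lemma D_C y : Cs y -> Dset y.
Proof. by move=> hy eps he; exists y; rewrite subrr norm0. Qed.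

Lemma D_lim u l : (forall n, Dset (u n)) -> seq_cvg u l -> Dset l.
Proof.
move=> hu hc eps he.
have he2 : 0 < eps / 2 by lra.
case: (hc _ he2) => M hM.
case: (hu M _ he2) => y [hy hy2]; exists y; split => //.
have h1 := hM M (leqnn _). rewrite normB in h1.
have := cs_normD (l - u M) (u M - y).
rewrite addrA subrK. lra.
Qed.

Lemma D_add x y : Dset x -> Dset y -> Dset (x + y).
Proof.
move=> hx hy eps he; have he2 : 0 < eps / 2 by lra.
case: (hx _ he2) => c [hc1 hc2]; case: (hy _ he2) => d [hd1 hd2].
exists (c + d); split; first exact: Cadd.
have -> : x + y - (c + d) = (x - c) + (y - d) by rewrite opprD addrACA.
have := cs_normD (x - c) (y - d). lra.
Qed.

Lemma D_mul x y : Dset x -> Dset y -> Dset (x ** y).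
Proof.
move=> hx hy eps he; have he2 : 0 < eps / 2 by lra.
have hx0 := norm_ge0 x.
have hd0 : 0 < eps / (2 * (N x + 1)) by rewrite divr_gt0 //; lra.
case: (hy _ hd0) => d [hd1 hd2].
have hdd := norm_ge0 d.
have hc0 : 0 < eps / (2 * (N d + 1)) by rewrite divr_gt0 //; lra.
case: (hx _ hc0) => c [hc1 hc2].
exists (c ** d); split; first exact: Cmul.
have -> : x ** y - c ** d = x ** (y - d) + (x - c) ** d.
  by rewrite mulBr mulBl addrA subrK.
have h1 := cs_normD (x ** (y - d)) ((x - c) ** d).
have h2 := cs_normM x (y - d). have h3 := cs_normM (x - c) d.
have b1 := bnd hx0 he. have b2 := bnd hdd he.
have h4 : N x * N (y - d) <= N x * (eps / (2 * (N x + 1))).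
  by rewrite ler_wpM2l // ltW.
have h5 : N (x - c) * N d <= N d * (eps / (2 * (N d + 1))).
  by rewrite mulrC ler_wpM2l // ltW.
lra.
Qed.

Lemma D_star x : Dset x -> Dset (cs_star x).
Proof.
move=> hx eps he; case: (hx _ he) => c [hc1 hc2].
exists (cs_star c); split; first exact: Cstar.
by rewrite -starB norm_star.
Qed.

Lemma D_scale (c : R[i]) x : Dset x -> Dset (c *: x).
Proof.
move=> hx eps he; have he2 : 0 < eps / 2 by lra.
have hc0 : 0 <= Normc.normc c.
  by case: c => a b; rewrite /Normc.normc sqrtr_ge0.
have hd0 : 0 < eps / (2 * (Normc.normc c + 1)) by rewrite divr_gt0 //; lra.
case: (hx _ hd0) => d [hd1 hd2].
have hdd := norm_ge0 d.
have hr0 : 0 < eps / (2 * (N d + 1)) by rewrite divr_gt0 //; lra.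
case: (approx_complex c hr0) => z1 [z2 [m hm]].
exists (sc z1 z2 m *: d); split; first exact: Cscale.
have -> : c *: x - sc z1 z2 m *: d = c *: (x - d) + (c - sc z1 z2 m) *: d.
  by rewrite scalerBr scalerBl addrA subrK.
have h1 := cs_normD (c *: (x - d)) ((c - sc z1 z2 m) *: d).
rewrite !cs_normZ in h1.
have b1 := bnd hc0 he. have b2 := bnd hdd he.
have h4 : Normc.normc c * N (x - d) <= Normc.normc c * (eps / (2 * (Normc.normc c + 1))).
  by rewrite ler_wpM2l // ltW.
have h5 : Normc.normc (c - sc z1 z2 m) * N d <= N d * (eps / (2 * (N d + 1))).
  by rewrite mulrC ler_wpM2l // ltW.
lra.
Qed.

Lemma D_sub : sub_cstar Dset.
Proof.
split; first exact: D_C C0.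
split; first exact: D_add.
split; first by move=> c x; exact: D_scale.
split; first exact: D_mul.
split; first exact: D_star.
exact: D_lim.
Qed.

Lemma D_sep : separable Dset.
Proof.
exists (fun n => match unpickle n : option (nat * nat) with
                 | Some (k, m) => fl k m | None => 0 end).
split.
  move=> n; case: (unpickle n) => [[k m]|]; last exact: D_C C0.
  by apply: D_C; exists k, m.
move=> x hx eps he; case: (hx _ he) => y [[k [m <-]] h].
by exists (pickle (k, m)); rewrite pickleK.
Qed.

End Constr.
Theorem mainTheorem10 (R : realType) (E : CStarAlg R) (L : mult E -> Prop) :
  sigma_unital E ->
  msub_cstar L -> mseparable L ->
  exists D : subset_of E,
    [/\ sub_cstar D, separable D, contains_approx_unit D &
        forall m, L m -> in_image_of_MD D m].
Proof.
case=> e hau [hdc _] [s [_ hs]].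
have hau' := hau.
case: hau' => _ [_ [_ [_ [he1 [_ hconv]]]]].
exists (Dset e s); split.
- exact: D_sub.
- exact: D_sep.
- exists nat, (fun m n => (m <= n)%N), e.
  case: hau => h0 [h1 [h2 [h3 [h4 [h5 h6]]]]].
  do 4 (split => //).
  split => // i; have [_ [hp hn]] := h4 i; split => //.
  by apply: D_C; exact: Ce.
- move=> m hm.
  have [lin1 lin2 hid] := hdc m hm.
  have hA : forall k, Dset e s (m.1 (e k)).
    move=> k eps he; have he2 : 0 < eps / 2 by lra.
    case: (hs m hm _ he2) => n hn.
    exists ((s n).1 (e k)); split; first exact: Cse.
    have := hn (e k); have [_ [_ hek]] := he1 k.
    have hn0 := norm_ge0 (m.1 (e k) - (s n).1 (e k)).
    move=> h; have : eps / 2 * cs_norm (e k) <= eps / 2 by rewrite ler_piMr // ltW.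
    lra.
  have hB : forall x, Dset e s x -> Dset e s (m.2 x).
    move=> x hx; apply: (@D_lim _ _ _ _ (fun n => cs_mul x (m.1 (e n)))).
      by move=> n; apply: D_mul.
    move=> eps he; case: (hconv (m.2 x) eps he) => i0 hi0.
    exists i0 => n hn; rewrite hid; exact: (hi0 n hn).2.
  have hC : forall x, Dset e s x -> Dset e s (m.1 x).
    move=> x hx; apply: (@D_lim _ _ _ _ (fun n => cs_mul (m.2 (e n)) x)).
      by move=> n; apply: D_mul => //; apply: hB; apply: D_C; exact: Ce.
    move=> eps he; case: (hconv (m.1 x) eps he) => i0 hi0.
    exists i0 => n hn; rewrite -hid; exact: (hi0 n hn).1.
  exists m; split => //; split.
  + by move=> x hx; split; [apply: hC | apply: hB].
  + by move=> c x y _ _; split; [apply: lin1 | apply: lin2].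
  + by move=> x y _ _; apply: hid.
Qed.
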